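(* Let $X$ be a separable Hilbert space, $N\ge0$ an integer, and $F\subset H^2(\mathbb{D},X)$ a closed subspace. The following are equivalent: (i) there is an $X$-valued polynomial $p$ of degree $N$ with $F=E_p$; (ii) $\dim F=N+1$ and $F=H^2(\mathbb{D},X)\ominus\Theta H^2(\mathbb{D},X)$, where $$\Theta(z)=(P_{N+1}^\perp+zP_{N+1})(P_N^\perp+zP_N)\cdots(P_1^\perp+zP_1)$$ for some orthogonal projections $P_1,\dots,P_{N+1}$ on $X$ (with $P^\perp=I-P$), and $\dim\operatorname{Ker}\Theta(0)^*=1$.
   Context: $H^2(\mathbb{D},X)$: $X$-valued power series with square-summable coefficient norms; $S^*$ the backward shift; $E_p$ the closed linear span of $\{S^{*n}p:n\ge0\}$. $\Theta H^2(\mathbb{D},X)=\{\Theta g: g\in H^2(\mathbb{D},X)\}$, with $\Theta$ acting pointwise as an operator-valued function. *)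

(* Defs.v *)
From Stdlib Require Import Reals Lra.
Open Scope R_scope.
Set Implicit Arguments.

Record C := mkC { Re : R; Im : R }.
Definition C0 : C := mkC 0 0.
Definition C1 : C := mkC 1 0.
Definition Cadd (a b : C) : C := mkC (Re a + Re b) (Im a + Im b).
Definition Cmul (a b : C) : C :=
  mkC (Re a * Re b - Im a * Im b) (Re a * Im b + Im a * Re b).
Definition Cconj (a : C) : C := mkC (Re a) (- Im a).

Record Hilbert := {
  carrier :> Type;
  vzero : carrier;
  vadd : carrier -> carrier -> carrier;
  vopp : carrier -> carrier;
  vscal : C -> carrier -> carrier;
  inner : carrier -> carrier -> C;
  vadd_assoc : forall x y z, vadd x (vadd y z) = vadd (vadd x y) z;
  vadd_comm : forall x y, vadd x y = vadd y x;
  vadd_0 : forall x, vadd x vzero = x;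
  vadd_opp : forall x, vadd x (vopp x) = vzero;
  vscal_1 : forall x, vscal C1 x = x;
  vscal_assoc : forall a b x, vscal a (vscal b x) = vscal (Cmul a b) x;
  vscal_distr_v : forall a x y, vscal a (vadd x y) = vadd (vscal a x) (vscal a y);
  vscal_distr_c : forall a b x, vscal (Cadd a b) x = vadd (vscal a x) (vscal b x);
  inner_add_l : forall x y z, inner (vadd x y) z = Cadd (inner x z) (inner y z);
  inner_scal_l : forall a x y, inner (vscal a x) y = Cmul a (inner x y);
  inner_conj : forall x y, inner y x = Cconj (inner x y);
  inner_pos : forall x, 0 <= Re (inner x x);
  inner_def : forall x, inner x x = C0 -> x = vzero;
  complete : forall u : nat -> carrier,
    (forall eps, eps > 0 -> exists N, forall m n, (N <= m)%nat -> (N <= n)%nat ->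
        sqrt (Re (inner (vadd (u m) (vopp (u n))) (vadd (u m) (vopp (u n))))) < eps) ->
    exists l, forall eps, eps > 0 -> exists N, forall n, (N <= n)%nat ->
        sqrt (Re (inner (vadd (u n) (vopp l)) (vadd (u n) (vopp l)))) < eps
}.

Section H.
Variable X : Hilbert.

Definition vsub (x y : X) : X := @vadd X x (@vopp X y).
Definition norm2 (x : X) : R := Re (@inner X x x).
Definition vnorm (x : X) : R := sqrt (norm2 x).

Definition separable : Prop :=
  exists d : nat -> X, forall x eps, eps > 0 -> exists n, vnorm (vsub x (d n)) < eps.

Fixpoint vsum (n : nat) (v : nat -> X) : X :=
  match n with O => @vzero X | S n' => @vadd X (vsum n' v) (v n') end.

Definition X_dim (K : X -> Prop) (n : nat) : Prop :=
  exists e : nat -> X,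
    (forall i, (i < n)%nat -> K (e i)) /\
    (forall c : nat -> C, vsum n (fun i => @vscal X (c i) (e i)) = @vzero X ->
        forall i, (i < n)%nat -> c i = C0) /\
    (forall y, K y -> exists c : nat -> C, y = vsum n (fun i => @vscal X (c i) (e i))).

Definition orth_proj (P : X -> X) : Prop :=
  (forall x y, P (@vadd X x y) = @vadd X (P x) (P y)) /\
  (forall a x, P (@vscal X a x) = @vscal X a (P x)) /\
  (forall x, P (P x) = P x) /\
  (forall x y, @inner X (P x) y = @inner X x (P y)).

Definition Pperp (P : X -> X) (x : X) : X := vsub x (P x).

(* kernel of the adjoint T^* : y in Ker T^*  iff  <T x, y> = 0 for all x *)
Definition ker_adj (T : X -> X) (y : X) : Prop := forall x, @inner X (T x) y = C0.

(* ---------- H^2(D,X): power series  sum_j f j z^j  given by coefficients ---------- *)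
Definition in_H2 (f : nat -> X) : Prop :=
  exists l, Un_cv (fun n => sum_f_R0 (fun k => norm2 (f k)) n) l.

Definition H2_orth (f g : nat -> X) : Prop :=
  Un_cv (fun n => sum_f_R0 (fun k => Re (@inner X (f k) (g k))) n) 0 /\
  Un_cv (fun n => sum_f_R0 (fun k => Im (@inner X (f k) (g k))) n) 0.

(* ||f - g||_{H^2}^2 <= eps  (sup of the partial sums) *)
Definition H2_close (f g : nat -> X) (eps : R) : Prop :=
  forall n, sum_f_R0 (fun j => norm2 (vsub (f j) (g j))) n <= eps.

Definition H2_conv (u : nat -> nat -> X) (f : nat -> X) : Prop :=
  forall eps, eps > 0 -> exists K, forall k, (K <= k)%nat -> H2_close (u k) f eps.

Definition closed_subspace (F : (nat -> X) -> Prop) : Prop :=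
  (forall f, F f -> in_H2 f) /\
  F (fun _ => @vzero X) /\
  (forall f g, F f -> F g -> F (fun j => @vadd X (f j) (g j))) /\
  (forall a f, F f -> F (fun j => @vscal X a (f j))) /\
  (forall u f, (forall k, F (u k)) -> in_H2 f -> H2_conv u f -> F f).

Definition H2_dim (F : (nat -> X) -> Prop) (n : nat) : Prop :=
  exists e : nat -> nat -> X,
    (forall i, (i < n)%nat -> F (e i)) /\
    (forall c : nat -> C,
        (forall j, vsum n (fun i => @vscal X (c i) (e i j)) = @vzero X) ->
        forall i, (i < n)%nat -> c i = C0) /\
    (forall f, F f -> exists c : nat -> C,
        forall j, f j = vsum n (fun i => @vscal X (c i) (e i j))).

Definition is_poly_deg (p : nat -> X) (N : nat) : Prop :=
  p N <> @vzero X /\ forall j, (N < j)%nat -> p j = @vzero X.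

Definition bshift (f : nat -> X) : nat -> X := fun j => f (S j).

Fixpoint bshift_iter (n : nat) (f : nat -> X) : nat -> X :=
  match n with O => f | S n' => bshift (bshift_iter n' f) end.

Definition span_orbit (p : nat -> X) (g : nat -> X) : Prop :=
  exists (m : nat) (c : nat -> C),
    forall j, g j = vsum m (fun i => @vscal X (c i) (bshift_iter i p j)).

(* E_p = closed linear span of { S^{*n} p : n >= 0 } *)
Definition E_span (p : nat -> X) (f : nat -> X) : Prop :=
  in_H2 f /\ forall eps, eps > 0 -> exists g, span_orbit p g /\ H2_close f g eps.

(* multiplication of a power series h by  P^perp + z P  *)
Definition factor_apply (P : X -> X) (h : nat -> X) : nat -> X :=
  fun j => @vadd X (Pperp P (h j)) (match j with O => @vzero X | S j' => P (h j') end).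

(* Theta g  with  Theta(z) = (P_k^perp + z P_k) ... (P_1^perp + z P_1) *)
Fixpoint theta_apply (Ps : nat -> X -> X) (k : nat) (g : nat -> X) : nat -> X :=
  match k with O => g | S k' => factor_apply (Ps (S k')) (theta_apply Ps k' g) end.

(* Theta(0) = P_k^perp ... P_1^perp *)
Fixpoint theta0 (Ps : nat -> X -> X) (k : nat) (x : X) : X :=
  match k with O => x | S k' => Pperp (Ps (S k')) (theta0 Ps k' x) end.

End H.

Arguments vsub {X}. Arguments norm2 {X}. Arguments vnorm {X}. Arguments vsum {X}.
Arguments X_dim {X}. Arguments orth_proj {X}. Arguments Pperp {X}. Arguments ker_adj {X}.
Arguments in_H2 {X}. Arguments H2_orth {X}. Arguments H2_close {X}. Arguments H2_conv {X}.
Arguments closed_subspace {X}. Arguments H2_dim {X}. Arguments is_poly_deg {X}.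
Arguments bshift {X}. Arguments bshift_iter {X}. Arguments span_orbit {X}.
Arguments E_span {X}. Arguments factor_apply {X}. Arguments theta_apply {X}.
Arguments theta0 {X}.

(* Main.v *)
Require Import Defs.
From Stdlib Require Import Reals.
From Stdlib Require Import Reals Lra Lia Field Ring Classical FunctionalExtensionality ClassicalEpsilon.
Require Import Defs.
Open Scope R_scope.


Lemma Ceq (a b : C) : Re a = Re b -> Im a = Im b -> a = b.
Proof. destruct a, b; simpl; intros; subst; reflexivity. Qed.

Definition Copp (a : C) : C := mkC (- Re a) (- Im a).
Definition Csub (a b : C) : C := Cadd a (Copp b).
Definition Cnrm (a : C) : R := Re a * Re a + Im a * Im a.
Definition Cinv (a : C) : C := mkC (Re a / Cnrm a) (- Im a / Cnrm a).
Definition Cdiv (a b : C) : C := Cmul a (Cinv b).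

Lemma C_ring : ring_theory C0 C1 Cadd Cmul Csub Copp (@eq C).
Proof.
  constructor; intros; apply Ceq; simpl; ring.
Qed.
Add Ring Cring : C_ring.

Lemma Cnrm_pos (a : C) : a <> C0 -> 0 < Cnrm a.
Proof.
  intros H. unfold Cnrm. destruct a as [x y]; simpl.
  destruct (Req_dec x 0); destruct (Req_dec y 0); subst.
  - exfalso; apply H; reflexivity.
  - assert (0 < y*y) by (apply Rsqr_pos_lt; auto). nra.
  - assert (0 < x*x) by (apply Rsqr_pos_lt; auto). nra.
  - assert (0 < y*y) by (apply Rsqr_pos_lt; auto). nra.
Qed.

Lemma C_field : field_theory C0 C1 Cadd Cmul Csub Copp Cdiv Cinv (@eq C).
Proof.
  constructor.
  - exact C_ring.
  - intro H. assert (Re C1 = Re C0) by (rewrite H; reflexivity). simpl in *. lra.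
  - reflexivity.
  - intros p Hp. apply Cnrm_pos in Hp. apply Ceq; unfold Cinv, Cnrm in *; simpl in *; field; lra.
Qed.
Add Field Cfield : C_field.


Notation "x +v y" := (vadd _ x y) (at level 50, left associativity).
Notation "a *v x" := (vscal _ a x) (at level 40, no associativity).
Notation "-v x" := (vopp _ x) (at level 35).
Notation "'0v'" := (vzero _).
Notation "<< x , y >>" := (inner _ x y).

Section XL.
End XL.

Lemma vadd_0l {X : Hilbert} (x : X) : 0v +v x = x.
Proof. rewrite vadd_comm. apply vadd_0. Qed.

Lemma vadd_cancel {X : Hilbert} (x y z : X) : x +v y = x +v z -> y = z.
Proof.
  intros H. assert (E: (-v x) +v (x +v y) = (-v x) +v (x +v z)) by (rewrite H; reflexivity).
  rewrite !vadd_assoc in E. rewrite (vadd_comm _ (-v x) x), vadd_opp, !vadd_0l in E. exact E.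
Qed.

Lemma vadd_eq0 {X : Hilbert} (x y : X) : x +v y = x -> y = 0v.
Proof. intros H. apply (vadd_cancel x). rewrite vadd_0. exact H. Qed.

Lemma vscal_0c {X : Hilbert} (x : X) : C0 *v x = 0v.
Proof.
  apply (vadd_eq0 (C0 *v x)). rewrite <- vscal_distr_c. f_equal. apply Ceq; simpl; ring.
Qed.

Lemma vscal_c0 {X : Hilbert} (a : Defs.C) : a *v (0v : X) = 0v.
Proof.
  apply (vadd_eq0 (a *v (0v:X))). rewrite <- vscal_distr_v. rewrite vadd_0. reflexivity.
Qed.

Lemma vopp_unique {X : Hilbert} (x y : X) : x +v y = 0v -> y = -v x.
Proof. intros H. apply (vadd_cancel x). rewrite H, vadd_opp. reflexivity. Qed.

Lemma vscal_m1 {X : Hilbert} (x : X) : Copp C1 *v x = -v x.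
Proof.
  apply vopp_unique. rewrite <- (vscal_1 _ x) at 1. rewrite <- vscal_distr_c.
  replace (Cadd C1 (Copp C1)) with C0 by (apply Ceq; simpl; ring). apply vscal_0c.
Qed.

Lemma vopp_opp {X : Hilbert} (x : X) : -v (-v x) = x.
Proof. symmetry. apply vopp_unique. rewrite vadd_comm. apply vadd_opp. Qed.

Lemma vopp_add {X : Hilbert} (x y : X) : -v (x +v y) = (-v x) +v (-v y).
Proof.
  symmetry; apply vopp_unique.
  rewrite (vadd_comm _ (-v x)). rewrite vadd_assoc.
  rewrite <- (vadd_assoc _ x y). rewrite vadd_opp, vadd_0, vadd_opp. reflexivity.
Qed.

Lemma vscal_opp {X : Hilbert} a (x : X) : a *v (-v x) = -v (a *v x).
Proof.
  apply vopp_unique. rewrite <- vscal_distr_v, vadd_opp. apply vscal_c0.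
Qed.

Lemma vscal_Copp {X : Hilbert} a (x : X) : (Copp a) *v x = -v (a *v x).
Proof.
  apply vopp_unique. rewrite <- vscal_distr_c.
  replace (Cadd a (Copp a)) with C0 by ring. apply vscal_0c.
Qed.

Lemma vopp_0 {X : Hilbert} : -v (0v:X) = 0v.
Proof. symmetry. apply vopp_unique. apply vadd_0. Qed.

Lemma vsub_add {X : Hilbert} (x y : X) : x = y +v vsub x y.
Proof.
  unfold vsub. rewrite (vadd_comm _ x). rewrite vadd_assoc, vadd_opp, vadd_0l. reflexivity.
Qed.

Lemma vsub_eq0 {X : Hilbert} (x y : X) : vsub x y = 0v -> x = y.
Proof. intros H. rewrite (vsub_add x y), H, vadd_0. reflexivity. Qed.

Lemma vsub_diag {X : Hilbert} (x : X) : vsub x x = 0v.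
Proof. apply vadd_opp. Qed.

Lemma inner_0_l {X : Hilbert} (y : X) : << 0v, y >> = C0.
Proof.
  rewrite <- (vscal_0c (0v : X)). rewrite inner_scal_l. ring.
Qed.

Lemma inner_add_r {X : Hilbert} (x y z : X) : << x, y +v z >> = Cadd (<<x,y>>) (<<x,z>>).
Proof.
  rewrite inner_conj, inner_add_l, (inner_conj _ y x), (inner_conj _ z x).
  apply Ceq; simpl; ring.
Qed.

Lemma inner_scal_r {X : Hilbert} a (x y : X) : << x, a *v y >> = Cmul (Cconj a) (<<x,y>>).
Proof.
  rewrite inner_conj, inner_scal_l, (inner_conj _ y x). apply Ceq; simpl; ring.
Qed.

Lemma inner_0_r {X : Hilbert} (y : X) : << y, 0v >> = C0.
Proof. rewrite inner_conj, inner_0_l. apply Ceq; simpl; ring. Qed.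

Lemma inner_opp_l {X : Hilbert} (x y : X) : << -v x, y >> = Copp (<<x,y>>).
Proof. rewrite <- vscal_m1, inner_scal_l. ring. Qed.

Lemma inner_opp_r {X : Hilbert} (x y : X) : << x, -v y >> = Copp (<<x,y>>).
Proof. rewrite <- vscal_m1, inner_scal_r. apply Ceq; simpl; ring. Qed.

Lemma inner_self_Im {X : Hilbert} (x : X) : Im (<<x,x>>) = 0.
Proof.
  pose proof (inner_conj _ x x) as H. assert (Im (<<x,x>>) = Im (Cconj (<<x,x>>))) by (rewrite <- H; reflexivity).
  simpl in H0. lra.
Qed.

Lemma norm2_0 {X : Hilbert} (x : X) : norm2 x = 0 -> x = 0v.
Proof.
  intros H. apply inner_def. apply Ceq; [exact H | apply inner_self_Im].
Qed.

Lemma norm2_nonneg {X : Hilbert} (x : X) : 0 <= norm2 x.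
Proof. apply inner_pos. Qed.

Lemma norm2_zero {X : Hilbert} : norm2 (0v : X) = 0.
Proof. unfold norm2. rewrite inner_0_l. reflexivity. Qed.

Lemma inner_self_C0 {X : Hilbert} (x : X) : <<x,x>> = C0 -> x = 0v.
Proof. apply inner_def. Qed.

Lemma vscal_eq0 {X : Hilbert} a (x : X) : a *v x = 0v -> a <> C0 -> x = 0v.
Proof.
  intros H Ha. rewrite <- (vscal_1 _ x).
  replace C1 with (Cmul (Cinv a) a) by (field; exact Ha).
  rewrite <- vscal_assoc, H. apply vscal_c0.
Qed.

Lemma norm2_vsub_sym {X : Hilbert} (x y : X) : norm2 (vsub x y) = norm2 (vsub y x).
Proof.
  assert (vsub y x = -v (vsub x y)).
  { unfold vsub. rewrite vopp_add, vopp_opp, vadd_comm. reflexivity. }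
  rewrite H. unfold norm2. rewrite inner_opp_l, inner_opp_r. simpl. ring.
Qed.


Section PL.
Context {X : Hilbert} (P : X -> X) (HP : orth_proj P).

Lemma P_add x y : P (x +v y) = P x +v P y. Proof. apply HP. Qed.
Lemma P_scal a x : P (a *v x) = a *v P x. Proof. apply HP. Qed.
Lemma P_idem x : P (P x) = P x. Proof. apply HP. Qed.
Lemma P_adj x y : << P x, y >> = << x, P y >>. Proof. apply HP. Qed.
Lemma P_0 : P 0v = 0v.
Proof. rewrite <- (vscal_0c (0v:X)), P_scal. rewrite !vscal_0c. reflexivity. Qed.
Lemma P_opp x : P (-v x) = -v (P x).
Proof. rewrite <- !vscal_m1. apply P_scal. Qed.
Lemma Pp_def x : Pperp P x = x +v -v (P x). Proof. reflexivity. Qed.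
Lemma Pp_add x y : Pperp P (x +v y) = Pperp P x +v Pperp P y.
Proof.
  unfold Pperp, vsub. rewrite P_add, vopp_add.
  rewrite !vadd_assoc. f_equal. rewrite <- !vadd_assoc. f_equal. apply vadd_comm.
Qed.
Lemma Pp_scal a x : Pperp P (a *v x) = a *v Pperp P x.
Proof. unfold Pperp, vsub. rewrite P_scal, vscal_distr_v, vscal_opp. reflexivity. Qed.
Lemma Pp_0 : Pperp P 0v = 0v.
Proof. unfold Pperp, vsub. rewrite P_0, vadd_opp. reflexivity. Qed.
Lemma P_Pp x : P (Pperp P x) = 0v.
Proof. unfold Pperp, vsub. rewrite P_add, P_opp, P_idem, vadd_opp. reflexivity. Qed.
Lemma Pp_P x : Pperp P (P x) = 0v.
Proof. unfold Pperp, vsub. rewrite P_idem, vadd_opp. reflexivity. Qed.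
Lemma Pp_Pp x : Pperp P (Pperp P x) = Pperp P x.
Proof. unfold Pperp at 1, vsub at 1. rewrite P_Pp, vopp_0, vadd_0. reflexivity. Qed.
Lemma P_decomp x : x = P x +v Pperp P x.
Proof. unfold Pperp. apply vsub_add. Qed.
Lemma Pp_adj x y : << Pperp P x, y >> = << x, Pperp P y >>.
Proof.
  unfold Pperp, vsub. rewrite inner_add_l, inner_add_r, inner_opp_l, inner_opp_r, P_adj. reflexivity.
Qed.
Lemma P_split x y : P x +v Pperp P y = 0v -> P x = 0v /\ Pperp P y = 0v.
Proof.
  intros H.
  assert (H1 : P (P x +v Pperp P y) = P 0v) by (rewrite H; reflexivity).
  rewrite P_add, P_idem, P_Pp, vadd_0, P_0 in H1.
  split; [exact H1|]. rewrite H1, vadd_0l in H. exact H.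
Qed.
End PL.

Definition proj {X : Hilbert} (u : X) (x : X) : X := Cdiv (<<x,u>>) (<<u,u>>) *v u.

Lemma inner_uu_ne0 {X : Hilbert} (u : X) : u <> 0v -> <<u,u>> <> C0.
Proof. intros H E. apply H, inner_def, E. Qed.

Lemma Cconj_uu {X : Hilbert} (u : X) : Cconj (<<u,u>>) = <<u,u>>.
Proof. apply Ceq; simpl; [reflexivity| rewrite inner_self_Im; ring]. Qed.

Lemma Cconj_mul a b : Cconj (Cmul a b) = Cmul (Cconj a) (Cconj b).
Proof. apply Ceq; simpl; ring. Qed.
Lemma Cconj_inv a : Cconj (Cinv a) = Cinv (Cconj a).
Proof. apply Ceq; unfold Cinv, Cnrm; simpl; replace (- Im a * - Im a) with (Im a * Im a) by ring; unfold Rdiv; ring. Qed.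

Lemma proj_orth {X : Hilbert} (u : X) : u <> 0v -> orth_proj (proj u).
Proof.
  intros Hu. pose proof (inner_uu_ne0 u Hu) as Huu.
  unfold proj, Cdiv. repeat split.
  - intros x y. rewrite inner_add_l, <- vscal_distr_c. f_equal. ring.
  - intros a x. rewrite inner_scal_l, vscal_assoc. f_equal. ring.
  - intros x. rewrite inner_scal_l. f_equal. field. exact Huu.
  - intros x y. rewrite inner_scal_l, inner_scal_r.
    rewrite Cconj_mul, Cconj_inv, Cconj_uu, (inner_conj _ y u).
    rewrite (inner_conj _ u x). apply Ceq; simpl; ring.
Qed.

Lemma proj_u {X : Hilbert} (u : X) : u <> 0v -> proj u u = u.
Proof.
  intros Hu. unfold proj, Cdiv.
  replace (Cmul (<<u,u>>) (Cinv (<<u,u>>))) with C1 by (field; apply inner_uu_ne0; auto).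
  apply vscal_1.
Qed.


Fixpoint Csum (n : nat) (h : nat -> Defs.C) : Defs.C :=
  match n with O => C0 | S n' => Cadd (Csum n' h) (h n') end.
Fixpoint Rsum (n : nat) (h : nat -> R) : R :=
  match n with O => 0 | S n' => Rsum n' h + h n' end.

Lemma sum_f_R0_Rsum h n : sum_f_R0 h n = Rsum (S n) h.
Proof. induction n; simpl; [ring| rewrite IHn; simpl; ring]. Qed.

Lemma Re_Csum n h : Re (Csum n h) = Rsum n (fun k => Re (h k)).
Proof. induction n; simpl; [reflexivity| rewrite IHn; reflexivity]. Qed.
Lemma Im_Csum n h : Im (Csum n h) = Rsum n (fun k => Im (h k)).
Proof. induction n; simpl; [reflexivity| rewrite IHn; reflexivity]. Qed.

Lemma Csum_ext n h h' : (forall i, (i < n)%nat -> h i = h' i) -> Csum n h = Csum n h'.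
Proof. induction n; intros H; simpl; [reflexivity|]. rewrite IHn by (intros; apply H; lia). rewrite H by lia. reflexivity. Qed.
Lemma Rsum_ext n h h' : (forall i, (i < n)%nat -> h i = h' i) -> Rsum n h = Rsum n h'.
Proof. induction n; intros H; simpl; [reflexivity|]. rewrite IHn by (intros; apply H; lia). rewrite H by lia. reflexivity. Qed.
Lemma Csum_add n h k : Csum n (fun i => Cadd (h i) (k i)) = Cadd (Csum n h) (Csum n k).
Proof. induction n; simpl; [apply Ceq; simpl; ring| rewrite IHn; ring]. Qed.
Lemma Csum_zero n h : (forall i, (i < n)%nat -> h i = C0) -> Csum n h = C0.
Proof. induction n; intros H; simpl; [reflexivity|]. rewrite IHn by (intros; apply H; lia). rewrite H by lia. ring. Qed.
Lemma Csum_single n h i0 : (i0 < n)%nat -> (forall i, (i < n)%nat -> i <> i0 -> h i = C0) -> Csum n h = h i0.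
Proof.
  induction n; intros Hi H; [lia|]. simpl.
  destruct (Nat.eq_dec i0 n).
  - subst. rewrite Csum_zero by (intros; apply H; lia). ring.
  - rewrite IHn by (try lia; intros; apply H; lia). rewrite (H n) by lia. ring.
Qed.
Lemma Rsum_le n h k : (forall i, (i < n)%nat -> h i <= k i) -> Rsum n h <= Rsum n k.
Proof. induction n; intros H; simpl; [lra|]. pose proof (IHn (fun i Hi => H i ltac:(lia))). pose proof (H n ltac:(lia)). lra. Qed.
Lemma Rsum_nonneg n h : (forall i, (i < n)%nat -> 0 <= h i) -> 0 <= Rsum n h.
Proof. induction n; intros H; simpl; [lra|]. pose proof (IHn (fun i Hi => H i ltac:(lia))). pose proof (H n ltac:(lia)). lra. Qed.
Lemma Rsum_term n h i : (forall i, (i < n)%nat -> 0 <= h i) -> (i < n)%nat -> h i <= Rsum n h.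
Proof.
  induction n; intros H Hi; [lia|]. simpl.
  destruct (Nat.eq_dec i n).
  - subst. pose proof (Rsum_nonneg n h (fun j Hj => H j ltac:(lia))). lra.
  - pose proof (IHn (fun j Hj => H j ltac:(lia)) ltac:(lia)). pose proof (H n ltac:(lia)). lra.
Qed.
Lemma Rsum_add n h k : Rsum n (fun i => h i + k i) = Rsum n h + Rsum n k.
Proof. induction n; simpl; [ring| rewrite IHn; ring]. Qed.
Lemma Rsum_scal n a h : Rsum n (fun i => a * h i) = a * Rsum n h.
Proof. induction n; simpl; [ring| rewrite IHn; ring]. Qed.
Lemma Rsum_extend n m h : (n <= m)%nat -> (forall i, (n <= i < m)%nat -> h i = 0) -> Rsum m h = Rsum n h.
Proof.
  intros Hnm. induction Hnm; intros H; [reflexivity|]. simpl. rewrite IHHnm by (intros; apply H; lia).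
  rewrite H by lia. ring.
Qed.

Lemma vsum_ext {X : Hilbert} m (h h' : nat -> X) : (forall i, (i < m)%nat -> h i = h' i) -> vsum m h = vsum m h'.
Proof. induction m; intros H; simpl; [reflexivity|]. rewrite IHm by (intros; apply H; lia). rewrite H by lia. reflexivity. Qed.
Lemma vsum_zero {X : Hilbert} m (h : nat -> X) : (forall i, (i < m)%nat -> h i = 0v) -> vsum m h = 0v.
Proof. induction m; intros H; simpl; [reflexivity|]. rewrite IHm by (intros; apply H; lia). rewrite H by lia. apply vadd_0. Qed.
Lemma vsum_single {X : Hilbert} m (h : nat -> X) i0 : (i0 < m)%nat -> (forall i, (i < m)%nat -> i <> i0 -> h i = 0v) -> vsum m h = h i0.
Proof.
  induction m; intros Hi H; [lia|]. simpl.
  destruct (Nat.eq_dec i0 m).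
  - subst. rewrite vsum_zero by (intros; apply H; lia). apply vadd_0l.
  - rewrite IHm by (try lia; intros; apply H; lia). rewrite (H m) by lia. apply vadd_0.
Qed.
Lemma vsum_add {X : Hilbert} m (h k : nat -> X) : vsum m (fun i => h i +v k i) = vsum m h +v vsum m k.
Proof.
  induction m; simpl; [rewrite vadd_0; reflexivity|]. rewrite IHm.
  rewrite !vadd_assoc. f_equal. rewrite <- !vadd_assoc. f_equal. apply vadd_comm.
Qed.
Lemma vsum_lin {X : Hilbert} (f : X -> X) m (h : nat -> X) :
  (forall x y, f (x +v y) = f x +v f y) -> f 0v = 0v -> f (vsum m h) = vsum m (fun i => f (h i)).
Proof. intros Ha H0. induction m; simpl; [exact H0|]. rewrite Ha, IHm. reflexivity. Qed.
Lemma vsum_scal {X : Hilbert} a m (h : nat -> X) : a *v vsum m h = vsum m (fun i => a *v h i).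
Proof. apply vsum_lin; [intros; apply vscal_distr_v| apply vscal_c0]. Qed.
Lemma vsum_extend {X : Hilbert} n m (h : nat -> X) : (n <= m)%nat -> (forall i, (n <= i < m)%nat -> h i = 0v) -> vsum m h = vsum n h.
Proof.
  intros Hnm. induction Hnm; intros H; [reflexivity|]. simpl. rewrite IHHnm by (intros; apply H; lia).
  rewrite H by lia. apply vadd_0.
Qed.
Lemma vsum_update {X : Hilbert} m (c : nat -> Defs.C) (x : nat -> X) i0 a : (i0 < m)%nat ->
  vsum m (fun i => c i *v x i) +v (a *v x i0) =
  vsum m (fun i => (if Nat.eqb i i0 then Cadd (c i) a else c i) *v x i).
Proof.
  induction m; intros Hi; [lia|]. simpl.
  destruct (Nat.eq_dec i0 m).
  - subst. rewrite Nat.eqb_refl. rewrite (vsum_ext m (fun i => (if Nat.eqb i m then Cadd (c i) a else c i) *v x i) (fun i => c i *v x i)).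
    2:{ intros i Hi'. destruct (Nat.eqb_spec i m); [lia|reflexivity]. }
    rewrite vscal_distr_c, vadd_assoc. reflexivity.
  - destruct (Nat.eqb_spec m i0); [lia|].
    rewrite <- IHm by lia. rewrite <- !vadd_assoc. f_equal. apply vadd_comm.
Qed.
Lemma vsum_exchange {X : Hilbert} n m (c : nat -> Defs.C) (a : nat -> nat -> Defs.C) (x : nat -> X) :
  vsum n (fun i => c i *v vsum m (fun l => a i l *v x l)) =
  vsum m (fun l => Csum n (fun i => Cmul (c i) (a i l)) *v x l).
Proof.
  induction n; simpl.
  - symmetry. apply vsum_zero. intros. apply vscal_0c.
  - rewrite IHn, vsum_scal, <- vsum_add. apply vsum_ext. intros l _.
    rewrite vscal_assoc, <- vscal_distr_c. reflexivity.
Qed.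


Definition supp {X : Hilbert} (K : nat) (f : nat -> X) : Prop := forall j, (K <= j)%nat -> f j = 0v.
Definition ek {X : Hilbert} (k : nat) (x : X) : nat -> X := fun i => if Nat.eqb i k then x else 0v.
Definition orthP {X : Hilbert} (Ps : nat -> X -> X) (n : nat) : Prop :=
  forall i, (1 <= i <= n)%nat -> orth_proj (Ps i).

Definition Bs {X : Hilbert} (P : X -> X) (f : nat -> X) : nat -> X :=
  fun j => Pperp P (f j) +v P (f (S j)).
Fixpoint thetaS {X : Hilbert} (Ps : nat -> X -> X) (n : nat) (f : nat -> X) : nat -> X :=
  match n with O => f | S k => thetaS Ps k (Bs (Ps (S k)) f) end.
Fixpoint theta0S {X : Hilbert} (Ps : nat -> X -> X) (n : nat) (y : X) : X :=
  match n with O => y | S k => theta0S Ps k (Pperp (Ps (S k)) y) end.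

Lemma orthP_S {X : Hilbert} (Ps : nat -> X -> X) n : orthP Ps (S n) -> orthP Ps n.
Proof. intros H i Hi. apply H. lia. Qed.

Lemma Bs_supp {X : Hilbert} (P : X -> X) K f : orth_proj P -> supp K f -> supp K (Bs P f).
Proof. intros HP H j Hj. unfold Bs. rewrite !H by lia. rewrite Pp_0, P_0 by auto. apply vadd_0. Qed.

Lemma thetaS_supp {X : Hilbert} (Ps : nat -> X -> X) n K f : orthP Ps n -> supp K f -> supp K (thetaS Ps n f).
Proof.
  revert f. induction n; intros f HPs Hf; simpl; [exact Hf|].
  apply IHn; [apply orthP_S; auto|]. apply Bs_supp; auto. apply HPs; lia.
Qed.

Lemma thetaS_ext {X : Hilbert} (Ps : nat -> X -> X) n f g : (forall j, f j = g j) -> forall j, thetaS Ps n f j = thetaS Ps n g j.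
Proof.
  revert f g. induction n; intros f g H; simpl; [exact H|].
  apply IHn. intros j. unfold Bs. rewrite !H. reflexivity.
Qed.

Lemma thetaS_bshift {X : Hilbert} (Ps : nat -> X -> X) n f j : thetaS Ps n (bshift f) j = thetaS Ps n f (S j).
Proof.
  revert f j. induction n; intros f j; simpl; [reflexivity|].
  apply (IHn (Bs (Ps (S n)) f) j).
Qed.

Lemma thetaS_Ps_eq {X : Hilbert} (Ps Ps' : nat -> X -> X) n f :
  (forall i, (1 <= i <= n)%nat -> Ps i = Ps' i) -> thetaS Ps n f = thetaS Ps' n f.
Proof.
  revert f. induction n; intros f H; simpl; [reflexivity|].
  rewrite (H (S n)) by lia. apply IHn. intros; apply H; lia.
Qed.

Lemma thetaS_e0 {X : Hilbert} (Ps : nat -> X -> X) n y : orthP Ps n ->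
  forall j, thetaS Ps n (ek 0 y) j = ek 0 (theta0S Ps n y) j.
Proof.
  revert y. induction n; intros y HPs j; simpl; [reflexivity|].
  rewrite <- IHn by (apply orthP_S; auto).
  apply thetaS_ext. intros i. unfold Bs, ek. assert (HP : orth_proj (Ps (S n))) by (apply HPs; lia).
  destruct i; simpl.
  - rewrite (P_0 _ HP), vadd_0. reflexivity.
  - rewrite (P_0 _ HP), (Pp_0 _ HP), vadd_0. reflexivity.
Qed.

Lemma theta0_adj {X : Hilbert} (Ps : nat -> X -> X) n x y : orthP Ps n ->
  << theta0 Ps n x, y >> = << x, theta0S Ps n y >>.
Proof.
  revert y. induction n; intros y HPs; simpl; [reflexivity|].
  rewrite Pp_adj by (apply HPs; lia). apply IHn. apply orthP_S; auto.
Qed.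

Lemma theta_apply_0 {X : Hilbert} (Ps : nat -> X -> X) n g : theta_apply Ps n g 0%nat = theta0 Ps n (g 0%nat).
Proof.
  induction n; simpl; [reflexivity|]. unfold factor_apply. rewrite vadd_0, IHn. reflexivity.
Qed.

Lemma theta_ext {X : Hilbert} (Ps : nat -> X -> X) n f g : (forall j, f j = g j) -> forall j, theta_apply Ps n f j = theta_apply Ps n g j.
Proof.
  induction n; intros H j; simpl; [apply H|].
  unfold factor_apply. rewrite IHn by auto. destruct j; [reflexivity|]. rewrite IHn by auto. reflexivity.
Qed.

Definition bdry {X : Hilbert} (P : X -> X) (f g : nat -> X) (m : nat) : Defs.C :=
  match m with O => C0 | S m' => << P (f m), g m' >> end.

Lemma adj_identity {X : Hilbert} (P : X -> X) (f g : nat -> X) m : orth_proj P ->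
  Cadd (Csum m (fun j => << f j, factor_apply P g j >>)) (bdry P f g m) =
  Csum m (fun j => << Bs P f j, g j >>).
Proof.
  intros HP. induction m.
  - simpl. ring.
  - simpl. rewrite <- IHm. unfold factor_apply, Bs, bdry.
    rewrite inner_add_r, inner_add_l, Pp_adj by auto.
    destruct m.
    + rewrite inner_0_r. ring.
    + rewrite (P_adj _ HP (f (S m)) (g m)). ring.
Qed.

Lemma adj_fin {X : Hilbert} (P : X -> X) (f g : nat -> X) m : orth_proj P -> supp m f ->
  Csum m (fun j => << f j, factor_apply P g j >>) = Csum m (fun j => << Bs P f j, g j >>).
Proof.
  intros HP Hf. rewrite <- adj_identity by auto. unfold bdry. destruct m; [ring|].
  rewrite Hf by lia. rewrite P_0, inner_0_l by auto. ring.
Qed.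

Lemma adj_theta {X : Hilbert} (Ps : nat -> X -> X) n (f g : nat -> X) m : orthP Ps n -> supp m f ->
  Csum m (fun j => << f j, theta_apply Ps n g j >>) = Csum m (fun j => << thetaS Ps n f j, g j >>).
Proof.
  revert f. induction n; intros f HPs Hf; simpl; [reflexivity|].
  assert (HP : orth_proj (Ps (S n))) by (apply HPs; lia).
  rewrite adj_fin by auto. apply IHn; [apply orthP_S; auto| apply Bs_supp; auto].
Qed.


Definition factorB {X : Hilbert} (P : X -> X) (h : nat -> X) : nat -> X :=
  fun j => P (h j) +v (match j with O => 0v | S j' => Pperp P (h j') end).
Definition shift1 {X : Hilbert} (h : nat -> X) : nat -> X :=
  fun j => match j with O => 0v | S j' => h j' end.
Fixpoint shiftn {X : Hilbert} (n : nat) (h : nat -> X) : nat -> X :=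
  match n with O => h | S k => shiftn k (shift1 h) end.
Fixpoint thetaInv {X : Hilbert} (Ps : nat -> X -> X) (n : nat) (h : nat -> X) : nat -> X :=
  match n with O => h | S k => thetaInv Ps k (factorB (Ps (S k)) h) end.

Lemma factor_ext {X : Hilbert} (P : X -> X) a b : (forall j, a j = b j) -> forall j, factor_apply P a j = factor_apply P b j.
Proof. intros H j. unfold factor_apply. rewrite H. destruct j; [reflexivity| rewrite H; reflexivity]. Qed.

Lemma shiftn_ext {X : Hilbert} n (a b : nat -> X) : (forall j, a j = b j) -> forall j, shiftn n a j = shiftn n b j.
Proof.
  revert a b. induction n; intros a b H j; simpl; [apply H|]. apply IHn.
  intros [|i]; simpl; [reflexivity| apply H].
Qed.

Lemma factor_shift1 {X : Hilbert} (P : X -> X) h : orth_proj P ->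
  forall j, factor_apply P (shift1 h) j = shift1 (factor_apply P h) j.
Proof.
  intros HP [|j]; unfold factor_apply, shift1; simpl.
  - rewrite (Pp_0 _ HP). apply vadd_0.
  - destruct j; [rewrite (P_0 _ HP)|]; reflexivity.
Qed.

Lemma factor_shiftn {X : Hilbert} (P : X -> X) k h : orth_proj P ->
  forall j, factor_apply P (shiftn k h) j = shiftn k (factor_apply P h) j.
Proof.
  revert h. induction k; intros h HP j; simpl; [reflexivity|].
  rewrite IHk by auto. apply shiftn_ext. intros i. apply factor_shift1; auto.
Qed.

Lemma factor_factorB {X : Hilbert} (P : X -> X) h : orth_proj P ->
  forall j, factor_apply P (factorB P h) j = shift1 h j.
Proof.
  intros HP [|j]; unfold factor_apply, factorB, shift1.
  - rewrite vadd_0, vadd_0. apply (Pp_P _ HP).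
  - rewrite (Pp_add _ HP), (Pp_P _ HP), (Pp_Pp _ HP), vadd_0l.
    rewrite (P_add _ HP), (P_idem _ HP).
    assert (E : P (match j with 0%nat => 0v | S j' => Pperp P (h j') end) = 0v).
    { destruct j; [apply (P_0 _ HP)| apply (P_Pp _ HP)]. }
    rewrite E, vadd_0. rewrite vadd_comm. symmetry. apply P_decomp; auto.
Qed.

Lemma theta_inv {X : Hilbert} (Ps : nat -> X -> X) n h : orthP Ps n ->
  forall j, theta_apply Ps n (thetaInv Ps n h) j = shiftn n h j.
Proof.
  revert h. induction n; intros h HPs j; simpl; [reflexivity|].
  assert (HP : orth_proj (Ps (S n))) by (apply HPs; lia).
  rewrite (factor_ext _ _ (shiftn n (factorB (Ps (S n)) h))).
  2:{ apply IHn. apply orthP_S; auto. }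
  rewrite factor_shiftn by auto. apply shiftn_ext. apply factor_factorB; auto.
Qed.

Lemma shiftn_ek {X : Hilbert} n k (x : X) : forall j, shiftn n (ek k x) j = ek (k + n) x j.
Proof.
  revert k. induction n; intros k j; simpl.
  - rewrite Nat.add_0_r. reflexivity.
  - rewrite (shiftn_ext n _ (ek (S k) x)).
    + rewrite IHn. replace (S k + n)%nat with (k + S n)%nat by lia. reflexivity.
    + intros [|i]; reflexivity.
Qed.

Lemma factorB_supp {X : Hilbert} (P : X -> X) K h : orth_proj P -> supp K h -> supp (S K) (factorB P h).
Proof.
  intros HP H [|j] Hj; [lia|]. unfold factorB. rewrite !H by lia.
  rewrite (P_0 _ HP), (Pp_0 _ HP). apply vadd_0.
Qed.

Lemma thetaInv_supp {X : Hilbert} (Ps : nat -> X -> X) n K h : orthP Ps n -> supp K h -> supp (K + n) (thetaInv Ps n h).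
Proof.
  revert K h. induction n; intros K h HPs H; simpl.
  - rewrite Nat.add_0_r. exact H.
  - replace (K + S n)%nat with (S K + n)%nat by lia. apply IHn; [apply orthP_S; auto|].
    apply factorB_supp; auto. apply HPs; lia.
Qed.

Lemma ucv_const (u : nat -> R) m a l : (forall n, (m <= n)%nat -> u n = a) -> (Un_cv u l <-> l = a).
Proof.
  intros H. assert (Ha : Un_cv u a).
  { intros eps He. exists m. intros n Hn. rewrite H by lia. unfold Rdist. rewrite Rminus_diag, Rabs_R0. exact He. }
  split.
  - intros Hl. eapply UL_sequence; eauto.
  - intros ->. exact Ha.
Qed.

Lemma in_H2_supp {X : Hilbert} K (f : nat -> X) : supp K f -> in_H2 f.
Proof.
  intros H. exists (Rsum K (fun k => norm2 (f k))).
  refine (proj2 (ucv_const _ K (Rsum K (fun k => norm2 (f k))) _ _) eq_refl).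
  intros n Hn. rewrite sum_f_R0_Rsum. apply Rsum_extend; [lia|].
  intros i Hi. rewrite H by lia. apply norm2_zero.
Qed.

Lemma H2_orth_fin {X : Hilbert} (f h : nat -> X) m :
  (forall k, (m <= k)%nat -> << f k, h k >> = C0) ->
  (H2_orth f h <-> Csum m (fun k => << f k, h k >>) = C0).
Proof.
  intros H. unfold H2_orth.
  rewrite (ucv_const _ m (Re (Csum m (fun k => << f k, h k >>)))).
  2:{ intros n Hn. rewrite sum_f_R0_Rsum, Re_Csum. apply Rsum_extend; [lia|]. intros i Hi. rewrite H by lia. reflexivity. }
  rewrite (ucv_const _ m (Im (Csum m (fun k => << f k, h k >>)))).
  2:{ intros n Hn. rewrite sum_f_R0_Rsum, Im_Csum. apply Rsum_extend; [lia|]. intros i Hi. rewrite H by lia. reflexivity. }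
  split.
  - intros [H1 H2]. apply Ceq; simpl; auto.
  - intros E. rewrite E. simpl. auto.
Qed.


Lemma Csum_self_zero {X : Hilbert} m (g : nat -> X) :
  Csum m (fun k => << g k, g k >>) = C0 -> forall k, (k < m)%nat -> g k = 0v.
Proof.
  intros H k Hk. apply norm2_0.
  assert (E : Re (Csum m (fun k => << g k, g k >>)) = 0) by (rewrite H; reflexivity).
  rewrite Re_Csum in E.
  pose proof (Rsum_term m (fun k => Re (<< g k, g k >>)) k (fun i _ => norm2_nonneg (g i)) Hk).
  pose proof (norm2_nonneg (g k)). unfold norm2 in *. simpl in *. lra.
Qed.

Lemma K_back {X : Hilbert} (Ps : nat -> X -> X) n f : orthP Ps n -> supp n f ->
  (forall j, thetaS Ps n f j = 0v) -> forall g, H2_orth f (theta_apply Ps n g).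
Proof.
  intros HPs Hf Ht g. apply (H2_orth_fin _ _ n).
  - intros k Hk. rewrite Hf by lia. apply inner_0_l.
  - rewrite adj_theta by auto. apply Csum_zero. intros i _. rewrite Ht. apply inner_0_l.
Qed.

Lemma K_fwd {X : Hilbert} (Ps : nat -> X -> X) n f : orthP Ps n ->
  (forall g, in_H2 g -> H2_orth f (theta_apply Ps n g)) ->
  supp n f /\ forall j, thetaS Ps n f j = 0v.
Proof.
  intros HPs H.
  assert (Hs : supp n f).
  { intros j Hj. set (x := f j).
    set (g := thetaInv Ps n (ek (j - n) x)).
    assert (Hg : in_H2 g).
    { apply (in_H2_supp (S (j - n) + n)). apply thetaInv_supp; auto.
      intros i Hi. unfold ek. destruct (Nat.eqb_spec i (j - n)); [lia|reflexivity]. }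
    assert (Eg : forall k, theta_apply Ps n g k = ek j x k).
    { intros k. unfold g. rewrite theta_inv by auto. rewrite shiftn_ek.
      replace (j - n + n)%nat with j by lia. reflexivity. }
    specialize (H g Hg).
    rewrite (H2_orth_fin _ _ (S j)) in H.
    2:{ intros k Hk. rewrite Eg. unfold ek. destruct (Nat.eqb_spec k j); [lia|]. apply inner_0_r. }
    rewrite (Csum_single _ _ j) in H; [| lia |].
    2:{ intros i Hi Hij. rewrite Eg. unfold ek. destruct (Nat.eqb_spec i j); [lia|]. apply inner_0_r. }
    rewrite Eg in H. unfold ek in H. rewrite Nat.eqb_refl in H.
    apply inner_def. exact H. }
  split; [exact Hs|].
  set (g := thetaS Ps n f).
  assert (Hgs : supp n g) by (apply thetaS_supp; auto).
  specialize (H g (in_H2_supp _ _ Hgs)).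
  rewrite (H2_orth_fin _ _ n) in H.
  2:{ intros k Hk. rewrite Hs by lia. apply inner_0_l. }
  rewrite adj_theta in H by auto.
  intros j. destruct (Nat.lt_ge_cases j n).
  - apply (Csum_self_zero n g H j); auto.
  - apply Hgs; auto.
Qed.


Definition Sp {X : Hilbert} (n : nat) (p f : nat -> X) : Prop :=
  exists c : nat -> Defs.C, forall j, f j = vsum n (fun i => c i *v p (i + j)%nat).

Lemma Pp_opp {X : Hilbert} (P : X -> X) x : orth_proj P -> Pperp P (-v x) = -v (Pperp P x).
Proof. intros HP. rewrite <- !vscal_m1. apply Pp_scal; auto. Qed.

Lemma vadd_swap4 {X : Hilbert} (a b c d : X) : (a +v b) +v (c +v d) = (a +v c) +v (b +v d).
Proof.
  rewrite !vadd_assoc. f_equal. rewrite <- !vadd_assoc. f_equal. apply vadd_comm.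
Qed.

Lemma lin_sub {X : Hilbert} (P : X -> X) x y z w : orth_proj P ->
  Pperp P (vsub x y) +v P (vsub z w) = vsub (Pperp P x +v P z) (Pperp P y +v P w).
Proof.
  intros HP. unfold vsub at 1 2. rewrite (Pp_add _ HP), (P_add _ HP), (Pp_opp _ _ HP), (P_opp _ HP).
  unfold vsub. rewrite vopp_add. apply vadd_swap4.
Qed.

Lemma Bs_vsum {X : Hilbert} (P : X -> X) (p : nat -> X) c m j : orth_proj P ->
  Bs P (fun j => vsum m (fun i => c i *v p (i + j)%nat)) j = vsum m (fun i => c i *v Bs P p (i + j)%nat).
Proof.
  intros HP. unfold Bs.
  rewrite (vsum_lin (Pperp P)) by (try apply Pp_add; try apply Pp_0; auto).
  rewrite (vsum_lin P) by (try apply P_add; try apply P_0; auto).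
  rewrite <- vsum_add. apply vsum_ext. intros i _.
  rewrite (Pp_scal _ HP), (P_scal _ HP), <- vscal_distr_v. rewrite Nat.add_succ_r. reflexivity.
Qed.

Lemma Bs_ek0 {X : Hilbert} (P : X -> X) y : orth_proj P -> forall j, Bs P (ek 0 y) j = ek 0 (Pperp P y) j.
Proof.
  intros HP [|j]; unfold Bs, ek; simpl.
  - rewrite (P_0 _ HP). apply vadd_0.
  - rewrite (P_0 _ HP), (Pp_0 _ HP). apply vadd_0.
Qed.

Theorem Tn {X : Hilbert} (n : nat) : forall p : nat -> X, supp n p -> ((0 < n)%nat -> p (pred n) <> 0v) ->
  exists Ps, orthP Ps n /\ (forall f, (forall j, thetaS Ps n f j = 0v) <-> Sp n p f) /\
    (forall y, (forall j, thetaS Ps n (ek 0 y) j = 0v) -> exists c, y = c *v p (pred n)).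
Proof.
  induction n; intros p Hsupp Hnz.
  - exists (fun _ x => x). split; [intros i Hi; lia|]. split.
    + intros f. simpl. split.
      * intros H. exists (fun _ => C0). intros j. apply H.
      * intros [c Hc] j. apply Hc.
    + intros y H. exists C0. specialize (H 0%nat). simpl in H. unfold ek in H. simpl in H.
      rewrite H, vscal_0c. reflexivity.
  - set (u := p n).
    assert (Hu : u <> 0v) by (apply Hnz; lia).
    set (P := proj u).
    assert (HP : orth_proj P) by (apply proj_orth; auto).
    assert (Pu : P u = u) by (apply proj_u; auto).
    set (p' := Bs P p).
    assert (Hs' : supp n p').
    { intros j Hj. unfold p', Bs. rewrite (Hsupp (S j)) by lia. rewrite (P_0 _ HP), vadd_0.
      destruct (Nat.eq_dec j n).
      - subst j. fold u. unfold Pperp. rewrite Pu. apply vsub_diag.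
      - rewrite Hsupp by lia. apply (Pp_0 _ HP). }
    assert (Hnz' : (0 < n)%nat -> p' (pred n) <> 0v).
    { intros Hn E. unfold p', Bs in E. replace (S (pred n)) with n in E by lia. fold u in E.
      rewrite vadd_comm in E. apply (P_split _ HP) in E. destruct E as [E _]. rewrite Pu in E. auto. }
    destruct (IHn p' Hs' Hnz') as [Ps' [HPs' [Hiff' Hker']]].
    set (Ps := fun i => if Nat.eqb i (S n) then P else Ps' i).
    assert (Eth : forall f, thetaS Ps (S n) f = thetaS Ps' n (Bs P f)).
    { intros f. simpl. replace (Ps (S n)) with P by (unfold Ps; rewrite Nat.eqb_refl; reflexivity).
      apply thetaS_Ps_eq. intros i Hi. unfold Ps. destruct (Nat.eqb_spec i (S n)); [lia|reflexivity]. }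
    exists Ps. split; [|split].
    + intros i Hi. unfold Ps. destruct (Nat.eqb_spec i (S n)); [exact HP| apply HPs'; lia].
    + intros f. rewrite Eth, Hiff'. split.
      * intros [c Hc].
        set (g := fun j => vsum n (fun i => c i *v p (i + j)%nat)).
        assert (Hg : forall j, Bs P g j = Bs P f j).
        { intros j. unfold g. rewrite Bs_vsum by auto. symmetry. apply Hc. }
        set (h := fun j => vsub (f j) (g j)).
        assert (Hh : forall j, Pperp P (h j) +v P (h (S j)) = 0v).
        { intros j. unfold h. rewrite (lin_sub _ _ _ _ _ HP). fold (Bs P f j) (Bs P g j).
          rewrite Hg. apply vsub_diag. }
        set (al := Cdiv (<< h 0%nat, u >>) (<< u, u >>)).
        assert (Hh' : forall j, h j = al *v p (n + j)%nat).
        { intros [|j].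
          - rewrite Nat.add_0_r. fold u.
            specialize (Hh 0%nat). rewrite vadd_comm in Hh.
            rewrite (P_decomp P (h 0%nat)).
            destruct (P_split _ HP _ _ Hh) as [_ E0].
            rewrite E0, vadd_0. reflexivity.
          - rewrite Hsupp by lia. rewrite vscal_c0.
            rewrite (P_decomp P (h (S j))).
            destruct (P_split _ HP _ _ (eq_trans (vadd_comm _ _ _) (Hh j))) as [E1 _].
            destruct (P_split _ HP _ _ (eq_trans (vadd_comm _ _ _) (Hh (S j)))) as [_ E2].
            rewrite E1, E2. apply vadd_0. }
        exists (fun i => if Nat.eqb i n then al else c i). intros j.
        simpl. rewrite Nat.eqb_refl.
        rewrite (vsum_ext n _ (fun i => c i *v p (i + j)%nat)).
        2:{ intros i Hi. destruct (Nat.eqb_spec i n); [lia|reflexivity]. }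
        fold (g j). rewrite <- Hh'. apply vsub_add.
      * intros [c Hc]. exists c. intros j.
        assert (E : Bs P f j = Bs P (fun j => vsum (S n) (fun i => c i *v p (i + j)%nat)) j).
        { unfold Bs. rewrite !Hc. reflexivity. }
        rewrite E, Bs_vsum by auto. simpl. fold p'. rewrite (Hs' (n + j)%nat) by lia.
        rewrite vscal_c0, vadd_0. reflexivity.
    + intros y Hy.
      assert (Hy' : forall j, thetaS Ps' n (ek 0 (Pperp P y)) j = 0v).
      { intros j. rewrite <- (thetaS_ext Ps' n (Bs P (ek 0 y))) by (apply Bs_ek0; auto).
        rewrite <- Eth. apply Hy. }
      destruct (Hker' _ Hy') as [c Hc].
      assert (Hpy : Pperp P y = 0v).
      { destruct n as [|m].
        - rewrite Hc. simpl. rewrite (Hs' 0%nat) by lia. apply vscal_c0.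
        - simpl in Hc. assert (E : P (Pperp P y) = c *v u).
          { rewrite Hc, (P_scal _ HP). f_equal. unfold p', Bs. rewrite (P_add _ HP), (P_Pp _ HP), vadd_0l.
            rewrite (P_idem _ HP). exact Pu. }
          rewrite (P_Pp _ HP) in E.
          destruct (classic (c = C0)) as [Hc0|Hc0].
          + rewrite Hc, Hc0. apply vscal_0c.
          + exfalso. apply Hu. apply (vscal_eq0 c); auto. }
      exists (Cdiv (<< y, u >>) (<< u, u >>)). simpl. fold u.
      transitivity (P y +v Pperp P y); [apply P_decomp|]. rewrite Hpy, vadd_0. reflexivity.
Qed.


Lemma quad_expand {X : Hilbert} (x y : X) a :
  Re (<< x +v a *v y, x +v a *v y >>) =
  norm2 x + Re (Cmul (Cconj a) (<<x,y>>)) + Re (Cmul a (Cconj (<<x,y>>))) + Re (Cmul a (Cconj a)) * norm2 y.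
Proof.
  rewrite inner_add_l, inner_scal_l, !inner_add_r, !inner_scal_r.
  rewrite (inner_conj _ y x). unfold norm2.
  pose proof (inner_self_Im y). destruct (<<y,y>>) as [yr yi]. simpl in *. subst yi.
  destruct a, (<<x,y>>), (<<x,x>>). simpl. ring.
Qed.

Lemma cs_re {X : Hilbert} (x y : X) r : 0 <= norm2 x + 2 * r * Re (<<x,y>>) + r * r * norm2 y.
Proof.
  pose proof (inner_pos _ (x +v mkC r 0 *v y)). rewrite quad_expand in H.
  destruct (<<x,y>>). simpl in *. nra.
Qed.

Lemma cs_im {X : Hilbert} (x y : X) r : 0 <= norm2 x + 2 * r * Im (<<x,y>>) + r * r * norm2 y.
Proof.
  pose proof (inner_pos _ (x +v mkC 0 r *v y)). rewrite quad_expand in H.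
  destruct (<<x,y>>). simpl in *. nra.
Qed.

Lemma real_zero (W A : R) : 0 <= A -> (forall eps, eps > 0 -> forall r, 0 <= eps + 2 * r * W + r * r * A) -> W = 0.
Proof.
  intros HA H. destruct (Req_dec W 0) as [|HW]; [auto|exfalso].
  assert (HW2 : 0 < W * W) by (apply Rsqr_pos_lt; auto).
  set (eps := W * W / (2 * (A + 1))).
  assert (He : eps > 0) by (unfold eps; apply Rdiv_lt_0_compat; lra).
  specialize (H eps He (- W / (A + 1))).
  assert (E : eps + 2 * (- W / (A + 1)) * W + (- W / (A + 1)) * (- W / (A + 1)) * A
             = W * W * (1/2 - 2 + A / (A+1)) / (A + 1)) by (unfold eps; field; lra).
  rewrite E in H.
  assert (A / (A + 1) <= 1).
  { unfold Rdiv. apply (Rmult_le_reg_r (A+1)); [lra|]. rewrite Rmult_assoc, Rinv_l by lra. lra. }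
  assert (0 < A + 1) by lra.
  assert (W * W * (1 / 2 - 2 + A / (A + 1)) < 0) by nra.
  assert (W * W * (1 / 2 - 2 + A / (A + 1)) / (A + 1) < 0).
  { unfold Rdiv. apply Rmult_neg_pos; auto. apply Rinv_0_lt_compat; lra. }
  lra.
Qed.

Lemma approx_zero {X : Hilbert} n (f y : nat -> X) :
  (forall eps, eps > 0 -> exists g, Csum n (fun j => << g j, y j >>) = C0 /\
      Rsum n (fun j => norm2 (vsub (f j) (g j))) <= eps) ->
  Csum n (fun j => << f j, y j >>) = C0.
Proof.
  intros H.
  set (A := Rsum n (fun j => norm2 (y j))).
  assert (HA : 0 <= A) by (apply Rsum_nonneg; intros; apply norm2_nonneg).
  assert (Split : forall g : nat -> X, Csum n (fun j => << f j, y j >>) =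
     Cadd (Csum n (fun j => << g j, y j >>)) (Csum n (fun j => << vsub (f j) (g j), y j >>))).
  { intros g. rewrite <- Csum_add. apply Csum_ext. intros i _.
    rewrite (vsub_add (f i) (g i)) at 1. apply inner_add_l. }
  apply Ceq; simpl.
  - apply (real_zero _ A HA). intros eps He r.
    destruct (H eps He) as [g [Hg Hd]]. rewrite (Split g), Hg.
    simpl. rewrite Re_Csum.
    pose proof (Rsum_nonneg n (fun j => norm2 (vsub (f j) (g j)) + 2 * r * Re (<< vsub (f j) (g j), y j >>) + r * r * norm2 (y j))
                  (fun j _ => cs_re _ _ r)) as Hn.
    rewrite !Rsum_add, !Rsum_scal in Hn. fold A in Hn. lra.
  - apply (real_zero _ A HA). intros eps He r.
    destruct (H eps He) as [g [Hg Hd]]. rewrite (Split g), Hg.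
    simpl. rewrite Im_Csum.
    pose proof (Rsum_nonneg n (fun j => norm2 (vsub (f j) (g j)) + 2 * r * Im (<< vsub (f j) (g j), y j >>) + r * r * norm2 (y j))
                  (fun j _ => cs_im _ _ r)) as Hn.
    rewrite !Rsum_add, !Rsum_scal in Hn. fold A in Hn. lra.
Qed.


Lemma tri_indep {X : Hilbert} N (p : nat -> X) (c : nat -> Defs.C) : supp (S N) p -> p N <> 0v ->
  (forall j, vsum (S N) (fun i => c i *v p (i + j)%nat) = 0v) -> forall i, (i < S N)%nat -> c i = C0.
Proof.
  intros Hs Hn H.
  assert (Hk : forall k, forall i, (i < k)%nat -> (i < S N)%nat -> c i = C0).
  { induction k; intros i Hi HiN; [lia|].
    destruct (Nat.eq_dec i k); [|apply IHk; lia]. subst i.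
    specialize (H (N - k)%nat).
    rewrite (vsum_single _ _ k) in H; [|lia|].
    2:{ intros i Hi2 Hik. destruct (Nat.lt_ge_cases i k).
        - rewrite IHk by lia. apply vscal_0c.
        - rewrite Hs by lia. apply vscal_c0. }
    replace (k + (N - k))%nat with N in H by lia.
    destruct (classic (c k = C0)) as [|Hc]; [auto|].
    exfalso. apply Hn. apply (vscal_eq0 (c k)); auto. }
  intros i Hi. apply (Hk (S i)); lia.
Qed.


Definition skip (i0 i : nat) : nat := if Nat.ltb i i0 then i else S i.

Lemma Csum_skip n (h : nat -> Defs.C) i0 : (i0 <= n)%nat ->
  Csum (S n) h = Cadd (h i0) (Csum n (fun i => h (skip i0 i))).
Proof.
  induction n; intros Hi.
  - assert (i0 = 0%nat) by lia. subst. simpl. ring.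
  - destruct (Nat.eq_dec i0 (S n)).
    + subst. change (Csum (S (S n)) h) with (Cadd (Csum (S n) h) (h (S n))).
      rewrite (Csum_ext (S n) (fun i => h (skip (S n) i)) h).
      * ring.
      * intros i Hi'. unfold skip. destruct (Nat.ltb_spec i (S n)); [reflexivity|lia].
    + change (Csum (S (S n)) h) with (Cadd (Csum (S n) h) (h (S n))).
      rewrite IHn by lia. cbn [Csum]. replace (skip i0 n) with (S n) by (unfold skip; destruct (Nat.ltb_spec n i0); [lia|reflexivity]). ring.
Qed.

Lemma Csum_lin_sub n (c t x : nat -> Defs.C) z :
  Csum n (fun i => Cmul (c i) (Csub (x i) (Cmul (t i) z))) =
  Csub (Csum n (fun i => Cmul (c i) (x i))) (Cmul (Csum n (fun i => Cmul (c i) (t i))) z).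
Proof. induction n; simpl; [ring| rewrite IHn; ring]. Qed.

Lemma C1_ne_C0 : C1 <> C0.
Proof. intros H. assert (Re C1 = Re C0) by (rewrite H; reflexivity). simpl in *. lra. Qed.

Lemma elim_lemma : forall k m (a : nat -> nat -> Defs.C), (k < m)%nat ->
  exists c : nat -> Defs.C, (exists i, (i < m)%nat /\ c i <> C0) /\
    forall l, (l < k)%nat -> Csum m (fun i => Cmul (c i) (a i l)) = C0.
Proof.
  induction k; intros m a Hkm.
  - exists (fun _ => C1). split; [exists 0%nat; split; [lia| apply C1_ne_C0]|]. intros; lia.
  - destruct (classic (exists i0, (i0 < m)%nat /\ a i0 k <> C0)) as [[i0 [Hi0 Ha0]]|Hno].
    + set (t := fun i => Cdiv (a (skip i0 i) k) (a i0 k)).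
      set (a' := fun i l => Csub (a (skip i0 i) l) (Cmul (t i) (a i0 l))).
      destruct (IHk (m - 1)%nat a' ltac:(lia)) as [c' [[i1 [Hi1 Hc1]] Hc']].
      set (c := fun j => if Nat.eqb j i0 then Copp (Csum (m - 1) (fun i => Cmul (c' i) (t i)))
                         else c' (if Nat.ltb j i0 then j else (j - 1)%nat)).
      assert (Hcs : forall i, c (skip i0 i) = c' i).
      { intros i. unfold c, skip. destruct (Nat.ltb_spec i i0).
        - destruct (Nat.eqb_spec i i0); [lia|]. destruct (Nat.ltb_spec i i0); [reflexivity|lia].
        - destruct (Nat.eqb_spec (S i) i0); [lia|]. destruct (Nat.ltb_spec (S i) i0); [lia|].
          f_equal. lia. }
      exists c. split.
      * exists (skip i0 i1). split; [unfold skip; destruct (Nat.ltb_spec i1 i0); lia|].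
        rewrite Hcs. auto.
      * intros l Hl.
        replace m with (S (m - 1)) by lia.
        rewrite (Csum_skip (m - 1) _ i0) by lia.
        rewrite (Csum_ext (m - 1) _ (fun i => Cmul (c' i) (a (skip i0 i) l))) by (intros; rewrite Hcs; reflexivity).
        assert (E : Csum (m - 1) (fun i => Cmul (c' i) (a' i l)) = C0).
        { destruct (Nat.eq_dec l k).
          - subst l. apply Csum_zero. intros i _. unfold a', t. field. auto.
          - apply Hc'. lia. }
        unfold a' in E. rewrite Csum_lin_sub in E.
        unfold c at 1. rewrite Nat.eqb_refl.
        rewrite <- E. ring.
    + destruct (IHk m a ltac:(lia)) as [c [Hnz Hc]]. exists c. split; [auto|].
      intros l Hl. destruct (Nat.eq_dec l k).
      * subst l. apply Csum_zero. intros i Hi.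
        destruct (classic (a i k = C0)) as [E|E]; [rewrite E; ring|].
        exfalso. apply Hno. exists i. auto.
      * apply Hc. lia.
Qed.


Lemma bshift_iter_eq {X : Hilbert} i (p : nat -> X) j : bshift_iter i p j = p (i + j)%nat.
Proof.
  revert j. induction i; intros j; simpl; [reflexivity|].
  unfold bshift. rewrite IHi. f_equal. lia.
Qed.

Lemma span_orbit_Sp {X : Hilbert} n (p g : nat -> X) : supp n p -> span_orbit p g -> Sp n p g.
Proof.
  intros Hs [m [c Hc]].
  exists (fun i => if Nat.ltb i m then c i else C0). intros j. rewrite Hc.
  set (H := fun i => (if Nat.ltb i m then c i else C0) *v p (i + j)%nat).
  rewrite (vsum_ext m _ H).
  2:{ intros i Hi. unfold H. rewrite bshift_iter_eq. destruct (Nat.ltb_spec i m); [reflexivity|lia]. }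
  fold H.
  rewrite <- (vsum_extend m (Nat.max m n) H); [| lia |].
  2:{ intros i Hi; unfold H; destruct (Nat.ltb_spec i m); [lia| apply vscal_0c]. }
  apply vsum_extend; [lia|]. intros i Hi. unfold H. rewrite Hs by lia. apply vscal_c0.
Qed.

Lemma Sp_span_orbit {X : Hilbert} n (p g : nat -> X) : Sp n p g -> span_orbit p g.
Proof.
  intros [c Hc]. exists n, c. intros j. rewrite Hc. apply vsum_ext. intros i _. rewrite bshift_iter_eq. reflexivity.
Qed.

Lemma Sp_supp {X : Hilbert} n (p g : nat -> X) : supp n p -> Sp n p g -> supp n g.
Proof.
  intros Hs [c Hc] j Hj. rewrite Hc. apply vsum_zero. intros i _. rewrite Hs by lia. apply vscal_c0.
Qed.

Lemma Rsum_0 n : Rsum n (fun _ => 0) = 0.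
Proof. induction n; simpl; [reflexivity| rewrite IHn; ring]. Qed.

Lemma H2_close_self {X : Hilbert} (f : nat -> X) eps : eps > 0 -> H2_close f f eps.
Proof.
  intros He n. rewrite sum_f_R0_Rsum. rewrite (Rsum_ext _ _ (fun _ => 0)).
  - rewrite Rsum_0. lra.
  - intros i _. rewrite vsub_diag. apply norm2_zero.
Qed.

Lemma Sp_E_span {X : Hilbert} n (p f : nat -> X) : in_H2 f -> Sp n p f -> E_span p f.
Proof.
  intros Hin Hs. split; [exact Hin|]. intros eps He. exists f. split; [eapply Sp_span_orbit; eauto| apply H2_close_self; auto].
Qed.

Lemma vsub_0 {X : Hilbert} (x : X) : vsub x 0v = x.
Proof. unfold vsub. rewrite vopp_0. apply vadd_0. Qed.

Lemma le_all_eps (a : R) : 0 <= a -> (forall eps, eps > 0 -> a <= eps) -> a = 0.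
Proof.
  intros H0 H. destruct (Req_dec a 0); auto. specialize (H (a / 2) ltac:(lra)). lra.
Qed.

Lemma max_exists (Q : nat -> Prop) B : (exists k, Q k) -> (forall k, Q k -> (k < B)%nat) ->
  exists k, Q k /\ forall j, Q j -> (j <= k)%nat.
Proof.
  induction B; intros [k Hk] HB.
  - specialize (HB k Hk). lia.
  - destruct (classic (Q B)) as [HQ|HQ].
    + exists B. split; auto. intros j Hj. specialize (HB j Hj). lia.
    + apply IHB; [exists k; auto|]. intros j Hj. specialize (HB j Hj).
      destruct (Nat.eq_dec j B); [subst; contradiction| lia].
Qed.

Lemma dir1 {X : Hilbert} (N : nat) (F : (nat -> X) -> Prop) (HF : closed_subspace F) (p : nat -> X)
  (Hdeg : is_poly_deg p N) (HFp : forall f, F f <-> E_span p f) :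
  H2_dim F (S N) /\
   exists Ps : nat -> X -> X,
     (forall i, (1 <= i <= S N)%nat -> orth_proj (Ps i)) /\
     (forall f, F f <->
        (in_H2 f /\ forall g, in_H2 g -> H2_orth f (theta_apply Ps (S N) g))) /\
     X_dim (ker_adj (theta0 Ps (S N))) 1.
Proof.
  destruct Hdeg as [HpN Hpz].
  set (n := S N).
  assert (Hsp : supp n p) by (intros j Hj; apply Hpz; unfold n in Hj; lia).
  destruct (Tn n p Hsp (fun _ => HpN)) as [Ps [HPs [Hiff Hker]]].
  assert (KEY : forall f, F f <-> (in_H2 f /\ forall g, in_H2 g -> H2_orth f (theta_apply Ps n g))).
  { intros f. split.
    - intros Hf. apply HFp in Hf. destruct Hf as [Hin Happ]. split; [exact Hin|].
      assert (Hfs : supp n f).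
      { intros j Hj. apply norm2_0. apply le_all_eps; [apply norm2_nonneg|]. intros eps He.
        destruct (Happ eps He) as [g [Hg Hcl]].
        specialize (Hcl j). rewrite sum_f_R0_Rsum in Hcl.
        pose proof (Rsum_term (S j) (fun k => norm2 (vsub (f k) (g k))) j (fun i _ => norm2_nonneg _) ltac:(lia)).
        cbv beta in H. rewrite (Sp_supp n p g Hsp (span_orbit_Sp n p g Hsp Hg) j Hj), vsub_0 in H. lra. }
      intros g Hg. apply (H2_orth_fin _ _ n).
      { intros k Hk. rewrite Hfs by lia. apply inner_0_l. }
      apply approx_zero. intros eps He.
      destruct (Happ eps He) as [g' [Hg' Hcl]].
      pose proof (span_orbit_Sp n p g' Hsp Hg') as Hsp'.
      exists g'. split.
      + rewrite adj_theta by (auto; apply (Sp_supp n p); auto).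
        apply Csum_zero. intros i _. rewrite (proj2 (Hiff g') Hsp'). apply inner_0_l.
      + specialize (Hcl N). rewrite sum_f_R0_Rsum in Hcl. exact Hcl.
    - intros [Hin Horth]. destruct (K_fwd Ps n f HPs Horth) as [Hs Ht].
      apply HFp. apply (Sp_E_span n); auto. apply Hiff. exact Ht. }
  split.
  - exists (fun i => bshift_iter i p). split; [|split].
    + intros i Hi. apply HFp. apply (Sp_E_span n).
      * apply (in_H2_supp n). intros j Hj. rewrite bshift_iter_eq. apply Hsp. lia.
      * exists (fun l => if Nat.eqb l i then C1 else C0). intros j. rewrite bshift_iter_eq.
        rewrite (vsum_single _ _ i); [| unfold n in *; lia |].
        2:{ intros l Hl Hli; destruct (Nat.eqb_spec l i); [lia| apply vscal_0c]. }
        rewrite Nat.eqb_refl, vscal_1. reflexivity.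
    + intros c Hc. apply (tri_indep N p c Hsp HpN). intros j. rewrite <- (Hc j).
      apply vsum_ext. intros i _. rewrite bshift_iter_eq. reflexivity.
    + intros f Hf. apply KEY in Hf. destruct Hf as [Hin Horth].
      destruct (K_fwd Ps n f HPs Horth) as [Hs Ht]. apply Hiff in Ht. destruct Ht as [c Hc].
      exists c. intros j. rewrite Hc. apply vsum_ext. intros i _. rewrite bshift_iter_eq. reflexivity.
  - exists Ps. split; [exact HPs|]. split; [exact KEY|].
    assert (Hu : Sp n p (ek 0 (p N))).
    { exists (fun l => if Nat.eqb l N then C1 else C0). intros j.
      rewrite (vsum_single _ _ N); [| unfold n; lia |].
      2:{ intros l Hl Hli; destruct (Nat.eqb_spec l N); [lia| apply vscal_0c]. }
      rewrite Nat.eqb_refl, vscal_1. unfold ek. destruct j; simpl.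
      - rewrite Nat.add_0_r. reflexivity.
      - symmetry. apply Hsp. unfold n. lia. }
    exists (fun _ => p N). split; [|split].
    + intros i Hi x. rewrite theta0_adj by auto.
      pose proof (thetaS_e0 Ps n (p N) HPs 0%nat) as E. unfold ek at 2 in E. rewrite Nat.eqb_refl in E.
      rewrite <- E. rewrite (proj2 (Hiff _) Hu). apply inner_0_r.
    + intros c Hc i Hi. assert (i = 0%nat) by lia. subst i. simpl in Hc. rewrite vadd_0l in Hc.
      destruct (classic (c 0%nat = C0)) as [|Hc0]; [auto|]. exfalso. apply HpN. eapply vscal_eq0; eauto.
    + intros y Hy.
      assert (H0 : theta0S Ps n y = 0v).
      { specialize (Hy (theta0S Ps n y)). rewrite theta0_adj in Hy by auto. apply inner_def. exact Hy. }
      destruct (Hker y) as [c Hc].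
      { intros j. rewrite thetaS_e0 by auto. rewrite H0. unfold ek. destruct (Nat.eqb j 0); reflexivity. }
      exists (fun _ => c). simpl. rewrite vadd_0l. exact Hc.
Qed.


Lemma F_vsum {X : Hilbert} (F : (nat -> X) -> Prop) (HF : closed_subspace F) m (c : nat -> Defs.C) (x : nat -> nat -> X) :
  (forall i, (i < m)%nat -> F (x i)) -> F (fun j => vsum m (fun i => c i *v x i j)).
Proof.
  destruct HF as [_ [H0 [Hadd [Hscal _]]]].
  induction m; intros H; simpl.
  - exact H0.
  - apply (Hadd (fun j => vsum m (fun i => c i *v x i j)) (fun j => c m *v x m j)).
    + apply IHm. intros; apply H; lia.
    + apply Hscal. apply H. lia.
Qed.

Lemma dir2 {X : Hilbert} (N : nat) (F : (nat -> X) -> Prop) (HF : closed_subspace F)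
  (Hdim : H2_dim F (S N)) (Ps : nat -> X -> X)
  (HPs : forall i, (1 <= i <= S N)%nat -> orth_proj (Ps i))
  (Hiff : forall f, F f <-> (in_H2 f /\ forall g, in_H2 g -> H2_orth f (theta_apply Ps (S N) g)))
  (Hker : X_dim (ker_adj (theta0 Ps (S N))) 1) :
  exists p : nat -> X, is_poly_deg p N /\ (forall f, F f <-> E_span p f).
Proof.
  set (n := S N).
  assert (HPs' : orthP Ps n) by exact HPs.
  assert (HG : forall f, F f <-> (supp n f /\ forall j, thetaS Ps n f j = 0v)).
  { intros f. rewrite Hiff. split.
    - intros [Hin Horth]. apply K_fwd; auto.
    - intros [Hs Ht]. split; [apply (in_H2_supp n); auto|]. intros g _. apply K_back; auto. }
  assert (Hinv : forall f, F f -> F (bshift f)).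
  { intros f Hf. apply HG in Hf. destruct Hf as [Hs Ht]. apply HG. split.
    - intros j Hj. unfold bshift. apply Hs. lia.
    - intros j. rewrite thetaS_bshift. apply Ht. }
  assert (Hinvk : forall k f, F f -> F (bshift_iter k f)).
  { induction k; intros f Hf; simpl; [exact Hf| apply Hinv; auto]. }
  destruct Hker as [eu [Heu [Hindu Hspu]]].
  set (u := eu 0%nat).
  assert (Hu : u <> 0v).
  { intros E. specialize (Hindu (fun _ => C1)). simpl in Hindu.
    assert (C1 = C0); [|apply C1_ne_C0; auto].
    apply (Hindu ltac:(fold u; rewrite E, vscal_c0; apply vadd_0) 0%nat). lia. }
  assert (Hconst : forall y, F (ek 0 y) -> exists a, y = a *v u).
  { intros y Hy. apply HG in Hy. destruct Hy as [_ Ht].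
    assert (H0 : theta0S Ps n y = 0v).
    { pose proof (thetaS_e0 Ps n y HPs' 0%nat) as E. rewrite Ht in E. unfold ek in E. rewrite Nat.eqb_refl in E. auto. }
    destruct (Hspu y) as [c Hc].
    { intros x. rewrite theta0_adj by auto. fold n. rewrite H0. apply inner_0_r. }
    exists (c 0%nat). rewrite Hc. simpl. apply vadd_0l. }
  destruct Hdim as [e [He [Hind Hspan]]].
  set (Q := fun k => exists f, F f /\ f k <> 0v).
  assert (HQex : exists k, Q k).
  { apply NNPP. intros Hno.
    assert (Hz : forall j, e 0%nat j = 0v).
    { intros j. apply NNPP. intros Hj. apply Hno. exists j, (e 0%nat). split; auto. apply He. unfold n. lia. }
    assert (E : C1 = C0).
    { refine (Hind (fun i => if Nat.eqb i 0 then C1 else C0) _ 0%nat _); [|unfold n; lia].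
      intros j. apply vsum_zero. intros i Hi. destruct (Nat.eqb_spec i 0).
      - subst. rewrite Hz. apply vscal_c0.
      - apply vscal_0c. }
    apply C1_ne_C0; auto. }
  assert (HQb : forall k, Q k -> (k < n)%nat).
  { intros k [f [Hf Hk]]. apply NNPP. intros Hlt. apply Hk. apply HG in Hf. apply (proj1 Hf). lia. }
  destruct (max_exists Q n HQex HQb) as [k [[p [Fp Hpk]] Hmax]].
  assert (Hzero : forall f, F f -> forall j, (k < j)%nat -> f j = 0v).
  { intros f Hf j Hj. apply NNPP. intros Hfj. specialize (Hmax j (ex_intro _ f (conj Hf Hfj))). lia. }
  destruct (Hconst (p k)) as [b Hb].
  { replace (ek 0 (p k)) with (bshift_iter k p); [apply Hinvk; auto|].
    apply functional_extensionality. intros j. rewrite bshift_iter_eq. unfold ek.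
    destruct (Nat.eqb_spec j 0); [subst; f_equal; lia|]. apply Hzero; auto. lia. }
  assert (Hb0 : b <> C0) by (intros E; apply Hpk; rewrite Hb, E; apply vscal_0c).
  assert (Hrep : forall d, (d <= S k)%nat -> forall f, F f -> supp d f -> Sp (S k) p f).
  { induction d; intros Hd f Hf Hs.
    - exists (fun _ => C0). intros j. rewrite Hs by lia. symmetry. apply vsum_zero. intros; apply vscal_0c.
    - set (y := f d).
      destruct (Hconst y) as [a Ha].
      { replace (ek 0 y) with (bshift_iter d f); [apply Hinvk; auto|].
        apply functional_extensionality. intros j. rewrite bshift_iter_eq. unfold ek, y.
        destruct (Nat.eqb_spec j 0); [subst; f_equal; lia|]. apply Hs. lia. }
      set (al := Cdiv a b).
      assert (Hy : y = al *v p k).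
      { rewrite Ha, Hb, vscal_assoc. f_equal. unfold al. field. auto. }
      set (q := bshift_iter (k - d) p).
      assert (Fq : F q) by (apply Hinvk; auto).
      set (f' := fun j => f j +v (Copp al *v q j)).
      assert (Ff' : F f').
      { destruct HF as [_ [_ [Hadd [Hscal _]]]]. apply Hadd; auto. }
      assert (Hs' : supp d f').
      { intros j Hj. unfold f', q. rewrite bshift_iter_eq. destruct (Nat.eq_dec j d).
        - subst j. fold y. replace (k - d + d)%nat with k by lia. rewrite Hy, <- vscal_distr_c.
          replace (Cadd al (Copp al)) with C0 by ring. apply vscal_0c.
        - rewrite Hs by lia. rewrite (Hzero p Fp) by lia. rewrite vscal_c0. apply vadd_0. }
      destruct (IHd ltac:(lia) f' Ff' Hs') as [c Hc].
      exists (fun i => if Nat.eqb i (k - d) then Cadd (c i) al else c i). intros j.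
      rewrite <- vsum_update by lia. rewrite <- Hc. unfold f', q. rewrite bshift_iter_eq.
      rewrite <- vadd_assoc, <- vscal_distr_c. replace (Cadd (Copp al) al) with C0 by ring.
      rewrite vscal_0c, vadd_0. reflexivity. }
  assert (HSp : forall f, F f -> Sp (S k) p f).
  { intros f Hf. apply (Hrep (S k)); auto. intros j Hj. apply (Hzero f Hf). lia. }
  assert (HkN : k = N).
  { assert (k < n)%nat by (apply HQb; exists p; auto).
    destruct (Nat.eq_dec k N); [auto|exfalso].
    assert (Hex : forall i, exists ai : nat -> Defs.C, (i < n)%nat -> forall j, e i j = vsum (S k) (fun l => ai l *v p (l + j)%nat)).
    { intros i. destruct (Nat.lt_ge_cases i n) as [Hi|Hi].
      - destruct (HSp (e i) (He i Hi)) as [ai Hai]. exists ai. intros _. exact Hai.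
      - exists (fun _ => C0). intros; lia. }
    set (A := fun i => proj1_sig (constructive_indefinite_description _ (Hex i))).
    assert (HA : forall i, (i < n)%nat -> forall j, e i j = vsum (S k) (fun l => A i l *v p (l + j)%nat)).
    { intros i. unfold A. destruct (constructive_indefinite_description _ (Hex i)). simpl. auto. }
    destruct (elim_lemma (S k) n A ltac:(unfold n in *; lia)) as [c [[i1 [Hi1 Hc1]] Hc]].
    apply Hc1. apply (Hind c); auto. intros j.
    rewrite (vsum_ext n _ (fun i => c i *v vsum (S k) (fun l => A i l *v p (l + j)%nat))).
    2:{ intros i Hi. rewrite HA by auto. reflexivity. }
    rewrite vsum_exchange. apply vsum_zero. intros l Hl. rewrite Hc by auto. apply vscal_0c. }
  subst k.
  exists p. split.
  - split; [auto|]. intros j Hj. apply (Hzero p Fp). auto.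
  - intros f. split.
    + intros Hf. apply (Sp_E_span (S N)); [apply (proj1 HF); auto| apply HSp; auto].
    + intros [Hin Happ].
      assert (Hex : forall k : nat, exists g, span_orbit p g /\ H2_close f g (/ INR (S k))).
      { intros k. apply Happ. apply Rinv_0_lt_compat. apply lt_0_INR. lia. }
      set (U := fun k => proj1_sig (constructive_indefinite_description _ (Hex k))).
      assert (HU : forall k, span_orbit p (U k) /\ H2_close f (U k) (/ INR (S k))).
      { intros k. unfold U. destruct (constructive_indefinite_description _ (Hex k)). simpl. auto. }
      destruct HF as [HF1 [HF2 [HF3 [HF4 HF5]]]] eqn:HFe.
      apply (HF5 U); auto.
      * intros k. destruct (HU k) as [[m [c Hc]] _].
        replace (U k) with (fun j => vsum m (fun i => c i *v bshift_iter i p j)).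
        2:{ apply functional_extensionality. intros j. symmetry. apply Hc. }
        apply (F_vsum F HF m c (fun i => bshift_iter i p)). intros i _. apply Hinvk; auto.
      * intros eps He'.
        destruct (INR_unbounded (/ eps)) as [K HK].
        exists K. intros k Hk m.
        destruct (HU k) as [_ Hcl]. specialize (Hcl m).
        rewrite sum_f_R0_Rsum in *.
        rewrite (Rsum_ext _ _ (fun j => norm2 (vsub (f j) (U k j)))) by (intros; apply norm2_vsub_sym).
        assert (/ INR (S k) <= eps).
        { assert (INR K <= INR (S k)) by (apply le_INR; lia).
          assert (0 < INR (S k)) by (apply lt_0_INR; lia).
          assert (0 < / eps) by (apply Rinv_0_lt_compat; lra).
          rewrite <- (Rinv_inv eps). apply Rinv_le_contravar; lra. }
        lra.
Qed.

Close Scope R_scope.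

Theorem mainTheorem7 (X : Hilbert) (HX : separable X) (N : nat)
  (F : (nat -> X) -> Prop) (HF : closed_subspace F) :
  (exists p : nat -> X, is_poly_deg p N /\ (forall f, F f <-> E_span p f)) <->
  (H2_dim F (S N) /\
   exists Ps : nat -> X -> X,
     (forall i, (1 <= i <= S N)%nat -> orth_proj (Ps i)) /\
     (forall f, F f <->
        (in_H2 f /\ forall g, in_H2 g -> H2_orth f (theta_apply Ps (S N) g))) /\
     X_dim (ker_adj (theta0 Ps (S N))) 1).
Proof.
  split.
  - intros [p [Hdeg HFp]]. apply (dir1 N F HF p Hdeg HFp).
  - intros [Hdim [Ps [HPs [Hiff Hker]]]]. apply (dir2 N F HF Hdim Ps HPs Hiff Hker).
Qed.
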